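(* For $\theta\in(0,2\pi]$ let $$a(\theta)=2\frac{1-\cos\theta}{\theta^2}-\frac{\sin\theta}{2\theta},\qquad b(\theta)=\frac{1-\cos\theta}{\theta^4}-\frac{\sin\theta}{2\theta^3},$$ and $a(0)=1/2$, $b(0)=1/24$. Then (i) $a$ and $b$ are strictly decreasing and strictly positive on $(0,2\pi)$, with $\frac12=a(0)>a(\theta)>a(2\pi)=0$ and $\frac1{24}=b(0)>b(\theta)>b(2\pi)=0$ for $\theta\in(0,2\pi)$; (ii) $a(\theta)/b(\theta)$ is strictly increasing on $[0,2\pi)$, and $\sup_{0<\theta<2\pi}a(\theta)/b(\theta)=\lim_{\theta\to2\pi-}a(\theta)/b(\theta)=4\pi^2$. *)

(* Defs.v *)
From Stdlib Require Import Reals.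
From Coquelicot Require Import Coquelicot.
Open Scope R_scope.

Definition fa (t : R) : R :=
  if Req_EM_T t 0 then 1/2
  else 2 * (1 - cos t) / t ^ 2 - sin t / (2 * t).

Definition fb (t : R) : R :=
  if Req_EM_T t 0 then 1/24
  else (1 - cos t) / t ^ 4 - sin t / (2 * t ^ 3).

(* Main.v *)
Require Import Defs.
From Stdlib Require Import Reals Lra Lia Psatz.
From Coquelicot Require Import Coquelicot.
Open Scope R_scope.

Definition A (t : R) := 2 * (1 - cos t) / t ^ 2 - sin t / (2 * t).
Definition B (t : R) := (1 - cos t) / t ^ 4 - sin t / (2 * t ^ 3).
Definition h (t : R) := 5 * t * sin t - t ^ 2 * cos t + 8 * cos t - 8.

Lemma B_deriv t : t <> 0 -> derivable_pt_lim B t (h t / (2 * t ^ 5)).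
Proof.
  intro Ht. apply is_derive_Reals. unfold B, h.
  auto_derive; [repeat split; repeat apply Rmult_integral_contrapositive_currified; auto; lra|].
  field; auto.
Qed.

Lemma A_deriv t : t <> 0 -> derivable_pt_lim A t (h t / (2 * t ^ 3)).
Proof.
  intro Ht. apply is_derive_Reals. unfold A, h.
  auto_derive; [repeat split; repeat apply Rmult_integral_contrapositive_currified; auto; lra|].
  field; auto.
Qed.

Lemma r_neg u : 0 < u <= PI -> u * cos u - sin u < 0.
Proof.
  intros [H0 H1].
  destruct (MVT_cor2 (fun u => u * cos u - sin u) (fun u => - (u * sin u)) 0 u H0) as [c [Hc1 Hc2]].
  { intros c _. apply is_derive_Reals. auto_derive; auto. ring. }
  rewrite sin_0 in Hc1.
  assert (0 < sin c) by (apply sin_gt_0; lra).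
  assert (0 < c * sin c) by (apply Rmult_lt_0_compat; lra).
  nra.
Qed.

Lemma p_neg u : 0 < u <= PI -> u^2 * sin u - 3 * sin u + 3 * u * cos u < 0.
Proof.
  intros [H0 H1].
  destruct (MVT_cor2 (fun u => u^2 * sin u - 3 * sin u + 3 * u * cos u) (fun u => u * (u * cos u - sin u)) 0 u H0) as [c [Hc1 Hc2]].
  { intros c _. apply is_derive_Reals. auto_derive; auto. ring. }
  rewrite sin_0 in Hc1.
  assert (c * cos c - sin c < 0) by (apply r_neg; lra).
  assert (c * (c * cos c - sin c) < 0) by (apply Rmult_pos_neg; lra) .
  nra.
Qed.

Lemma h_neg t : 0 < t < 2 * PI -> h t < 0.
Proof.
  intros [H0 H1]. set (u := t / 2).
  assert (Ht : t = 2 * u) by (unfold u; lra).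
  assert (Hs : 0 < sin u) by (apply sin_gt_0; unfold u; lra).
  assert (Hp := p_neg u ltac:(unfold u; lra)).
  unfold h. rewrite Ht, sin_2a, cos_2a.
  assert (E : sin u ^ 2 + cos u ^ 2 = 1) by (rewrite <- (sin2_cos2 u); unfold Rsqr; ring).
  assert (sin u * (u^2 * sin u - 3 * sin u + 3 * u * cos u) < 0) by (apply Rmult_pos_neg; lra).
  match goal with |- ?L < 0 => assert (EQ : L = 4 * (- (sin u - u * cos u)^2 + sin u * (u^2 * sin u - 3 * sin u + 3 * u * cos u)) + 8 * (sin u ^ 2 + cos u ^ 2 - 1)) by ring end.
  rewrite EQ, E. nra.
Qed.

Lemma B_dec x y : 0 < x -> x < y -> y <= 2 * PI -> B y < B x.
Proof.
  intros. destruct (MVT_cor2 B (fun t => h t / (2 * t ^ 5)) x y) as [c [Hc1 Hc2]]; auto.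
  { intros c Hc. apply B_deriv. lra. }
  assert (h c < 0) by (apply h_neg; lra).
  assert (0 < 2 * c ^ 5) by (assert (0 < c) by lra; apply Rmult_lt_0_compat; [lra| apply pow_lt; lra]).
  assert (h c / (2 * c ^ 5) < 0) by (apply Rdiv_neg_pos; lra).
  nra.
Qed.

Lemma A_dec x y : 0 < x -> x < y -> y <= 2 * PI -> A y < A x.
Proof.
  intros. destruct (MVT_cor2 A (fun t => h t / (2 * t ^ 3)) x y) as [c [Hc1 Hc2]]; auto.
  { intros c Hc. apply A_deriv. lra. }
  assert (h c < 0) by (apply h_neg; lra).
  assert (0 < 2 * c ^ 3) by (assert (0 < c) by lra; apply Rmult_lt_0_compat; [lra| apply pow_lt; lra]).
  assert (h c / (2 * c ^ 3) < 0) by (apply Rdiv_neg_pos; lra).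
  nra.
Qed.

Lemma A_2PI : A (2 * PI) = 0.
Proof. unfold A. rewrite cos_2PI, sin_2PI. assert (PI > 0) by apply PI_RGT_0. field. lra. Qed.
Lemma B_2PI : B (2 * PI) = 0.
Proof. unfold B. rewrite cos_2PI, sin_2PI. assert (PI > 0) by apply PI_RGT_0. field. lra. Qed.

Lemma A_pos t : 0 < t < 2 * PI -> 0 < A t.
Proof. intros. rewrite <- A_2PI. apply A_dec; lra. Qed.
Lemma B_pos t : 0 < t < 2 * PI -> 0 < B t.
Proof. intros. rewrite <- B_2PI. apply B_dec; lra. Qed.

Lemma taylor t : 0 <= t <= 2 ->
  t - t^3/6 + t^5/120 - t^7/5040 <= sin t /\ 1 - t^2/2 + t^4/24 - t^6/720 <= cos t.
Proof.
  intros. destruct (pre_sin_bound t 1) as [H1 _]; try lra.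
  destruct (pre_cos_bound t 1) as [H2 _]; try lra.
  unfold sin_approx, cos_approx, sin_term, cos_term in *. simpl in H1, H2.
  split; [eapply Rle_trans; [|apply H1] | eapply Rle_trans; [|apply H2]]; right; field.
Qed.

Lemma A_small t : 0 < t <= 2 -> A t <= 1/2.
Proof.
  intros. destruct (taylor t) as [Hs Hc]; try lra.
  unfold A. 
  assert (0 < t^2) by nra.
  assert (K : t^2 - 4 * (1 - cos t) + t * sin t >= 0).
  { assert (t * (t - t^3/6 + t^5/120 - t^7/5040) <= t * sin t) by (apply Rmult_le_compat_l; lra).
    assert (0 <= t^6 * (1/360 - t^2/5040)) by (apply Rmult_le_pos; nra).
    assert (t^2 - 4 * (1 - (1 - t^2/2 + t^4/24 - t^6/720)) + t * (t - t^3/6 + t^5/120 - t^7/5040) = t^6 * (1/360 - t^2/5040)) by field.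
    nra. }
  assert (E : 2 * (1 - cos t) / t ^ 2 - sin t / (2 * t) = 1/2 - (t^2 - 4 * (1 - cos t) + t * sin t) / (2 * t^2)) by (field; lra).
  rewrite E. assert (0 <= (t^2 - 4 * (1 - cos t) + t * sin t) / (2 * t^2)) by (apply Rdiv_le_0_compat; lra). lra.
Qed.

Lemma B_small t : 0 < t <= 2 -> B t <= 1/24.
Proof.
  intros. destruct (taylor t) as [Hs Hc]; try lra.
  unfold B.
  assert (0 < t^2) by nra. assert (0 < t^4) by nra.
  assert (K : t^4 - 24 * (1 - cos t) + 12 * t * sin t >= 0).
  { assert (t * (t - t^3/6 + t^5/120 - t^7/5040) <= t * sin t) by (apply Rmult_le_compat_l; lra).
    assert (0 <= t^6 * (1/15 - t^2/420)) by (apply Rmult_le_pos; nra).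
    assert (t^4 - 24 * (1 - (1 - t^2/2 + t^4/24 - t^6/720)) + 12 * t * (t - t^3/6 + t^5/120 - t^7/5040) = t^6 * (1/15 - t^2/420)) by field.
    nra. }
  assert (E : (1 - cos t) / t ^ 4 - sin t / (2 * t ^ 3) = 1/24 - (t^4 - 24 * (1 - cos t) + 12 * t * sin t) / (24 * t^4)) by (field; lra).
  rewrite E. assert (0 <= (t^4 - 24 * (1 - cos t) + 12 * t * sin t) / (24 * t^4)) by (apply Rdiv_le_0_compat; lra). lra.
Qed.

Lemma R_small t : 0 < t <= 2 -> 12 * B t <= A t.
Proof.
  intros. destruct (taylor t) as [Hs Hc]; try lra.
  unfold A, B.
  assert (0 < t^2) by nra. assert (0 < t^4) by nra.
  assert (K : (4 * t^2 - 24) * (1 - cos t) + (12 * t - t^3) * sin t >= 0).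
  { assert ((12 * t - t^3) * (t - t^3/6 + t^5/120 - t^7/5040) <= (12 * t - t^3) * sin t) by (apply Rmult_le_compat_l; nra).
    assert (0 <= (24 - 4 * t^2) * ((t^2/2 - t^4/24 + t^6/720) - (1 - cos t))) by (apply Rmult_le_pos; nra).
    assert (0 <= t^6 * (1/15 - 13 * t^2/2520 + t^4/5040)) by (apply Rmult_le_pos; nra).
    assert ((4 * t^2 - 24) * (t^2/2 - t^4/24 + t^6/720) + (12 * t - t^3) * (t - t^3/6 + t^5/120 - t^7/5040) = t^6 * (1/15 - 13 * t^2/2520 + t^4/5040)) by field.
    nra. }
  assert (E : 2 * (1 - cos t) / t ^ 2 - sin t / (2 * t) - 12 * ((1 - cos t) / t ^ 4 - sin t / (2 * t ^ 3)) = ((4 * t^2 - 24) * (1 - cos t) + (12 * t - t^3) * sin t) / (2 * t^4)) by (field; lra).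
  assert (0 <= ((4 * t^2 - 24) * (1 - cos t) + (12 * t - t^3) * sin t) / (2 * t^4)) by (apply Rdiv_le_0_compat; lra). lra.
Qed.

Lemma one_m_cos_pos t : 0 < t < 2 * PI -> 0 < 1 - cos t.
Proof.
  intros. replace t with (2 * (t/2)) by field. rewrite cos_2a_sin.
  assert (0 < sin (t/2)) by (apply sin_gt_0; lra). nra.
Qed.

Lemma R_inc x y : 0 < x -> x < y -> y < 2 * PI -> A x / B x < A y / B y.
Proof.
  intros.
  destruct (MVT_cor2 (fun t => A t / B t)
    (fun t => (h t / (2 * t ^ 3) * B t - h t / (2 * t ^ 5) * A t) / Rsqr (B t)) x y) as [c [Hc1 Hc2]]; auto.
  { intros c Hc. apply (derivable_pt_lim_div A B).
    - apply A_deriv; lra.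
    - apply B_deriv; lra.
    - assert (0 < B c) by (apply B_pos; lra). lra. }
  assert (Hc0 : 0 < c) by lra.
  assert (HB : 0 < B c) by (apply B_pos; lra).
  assert (Hh : h c < 0) by (apply h_neg; lra).
  assert (Hcos : 0 < 1 - cos c) by (apply one_m_cos_pos; lra).
  assert (E : (h c / (2 * c ^ 3) * B c - h c / (2 * c ^ 5) * A c) / Rsqr (B c)
     = (- h c) * (1 - cos c) / (2 * c ^ 7 * Rsqr (B c))).
  { assert (EA : A c = c^2 * B c + (1 - cos c) / c^2) by (unfold A, B; field; lra).
    rewrite EA. unfold Rsqr. field. lra. }
  rewrite E in Hc1.
  assert (0 < (- h c) * (1 - cos c) / (2 * c ^ 7 * Rsqr (B c))).
  { apply Rdiv_lt_0_compat. nra. unfold Rsqr.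
    assert (0 < c^7) by (apply pow_lt; lra). assert (0 < B c * B c) by nra. nra. }
  nra.
Qed.

Definition G t := t^2 + t^2 * sin (t/2) / (sin (t/2) - (t/2) * cos (t/2)).

Lemma R_G t : 0 < t < 2 * PI -> A t / B t = G t.
Proof.
  intros. unfold A, B, G.
  assert (Hs : 0 < sin (t/2)) by (apply sin_gt_0; lra).
  assert (Hr := r_neg (t/2) ltac:(lra)).
  set (u := t/2) in *.
  replace t with (2 * u) by (unfold u; field).
  rewrite sin_2a, cos_2a_sin.
  assert (0 < sin u * (sin u - u * cos u)) by (apply Rmult_lt_0_compat; lra).
  assert (0 < u) by (unfold u; lra).
  field. repeat split; lra.
Qed.

Lemma G_2PI : G (2 * PI) = 4 * PI ^ 2.
Proof.
  unfold G. replace (2 * PI / 2) with PI by field. rewrite sin_PI, cos_PI.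
  assert (PI > 0) by apply PI_RGT_0. field. lra.
Qed.

Lemma G_cont : continuous G (2 * PI).
Proof.
  apply (@ex_derive_continuous R_AbsRing R_NormedModule G (2 * PI)). unfold G. auto_derive.
  replace (2 * PI * / 2) with PI by field. rewrite sin_PI, cos_PI.
  assert (PI > 0) by apply PI_RGT_0. lra.
Qed.

Lemma fa_A t : t <> 0 -> fa t = A t.
Proof. intro. unfold fa. destruct (Req_EM_T t 0); [contradiction|reflexivity]. Qed.
Lemma fb_B t : t <> 0 -> fb t = B t.
Proof. intro. unfold fb. destruct (Req_EM_T t 0); [contradiction|reflexivity]. Qed.

Lemma lim_R : filterlim (fun t => fa t / fb t) (at_left (2 * PI)) (locally (4 * PI ^ 2)).
Proof.
  assert (PI > 0) by apply PI_RGT_0.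
  apply filterlim_ext_loc with G.
  - exists (mkposreal PI H). intros y Hy Hlt. simpl in Hy.
    unfold ball in Hy; simpl in Hy; unfold AbsRing_ball, abs, minus, plus, opp in Hy; simpl in Hy.
    assert (0 < y) by (apply Rabs_def2 in Hy; lra).
    rewrite fa_A, fb_B by lra. symmetry. apply R_G. lra.
  - rewrite <- G_2PI. eapply filterlim_filter_le_1; [|apply G_cont].
    apply filter_le_within.
Qed.

Lemma near_left (P : R -> Prop) : at_left (2 * PI) P -> exists d, 0 < d /\ forall s, 2 * PI - d < s < 2 * PI -> P s.
Proof.
  intros [e He]. exists e. split; [apply cond_pos|]. intros s Hs. apply He; [|lra].
  unfold ball; simpl; unfold AbsRing_ball, abs, minus, plus, opp; simpl.
  apply Rabs_def1; lra.
Qed.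

Lemma lim_eps eps : 0 < eps -> exists d, 0 < d /\ forall s, 2 * PI - d < s < 2 * PI ->
  Rabs (fa s / fb s - 4 * PI ^ 2) < eps.
Proof.
  intro He. destruct (proj1 (filterlim_locally _ _) lim_R (mkposreal eps He)) as [d Hd].
  exists d. split; [apply cond_pos|]. intros s Hs. 
  assert (Hb := Hd s). unfold ball in Hb; simpl in Hb; unfold AbsRing_ball, abs, minus, plus, opp in Hb; simpl in Hb.
  apply Hb; [|lra]. unfold ball; simpl; unfold AbsRing_ball, abs, minus, plus, opp; simpl.
  apply Rabs_def1; lra.
Qed.

Theorem lemma2 :
  (* (i) for a *)
  (forall x y, 0 < x -> x < y -> y < 2 * PI -> fa y < fa x) /\
  (forall t, 0 < t < 2 * PI -> 0 < fa t) /\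
  fa 0 = 1/2 /\ fa (2 * PI) = 0 /\
  (forall t, 0 < t < 2 * PI -> fa 0 > fa t /\ fa t > fa (2 * PI)) /\
  (* (i) for b *)
  (forall x y, 0 < x -> x < y -> y < 2 * PI -> fb y < fb x) /\
  (forall t, 0 < t < 2 * PI -> 0 < fb t) /\
  fb 0 = 1/24 /\ fb (2 * PI) = 0 /\
  (forall t, 0 < t < 2 * PI -> fb 0 > fb t /\ fb t > fb (2 * PI)) /\
  (* (ii) *)
  (forall x y, 0 <= x -> x < y -> y < 2 * PI -> fa x / fb x < fa y / fb y) /\
  is_lub (fun r => exists t, 0 < t < 2 * PI /\ r = fa t / fb t) (4 * PI ^ 2) /\
  filterlim (fun t => fa t / fb t) (at_left (2 * PI)) (locally (4 * PI ^ 2)).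
Proof.
  assert (HPI : PI > 0) by apply PI_RGT_0.
  assert (HPI4 := PI_4).
  assert (fa0 : fa 0 = 1/2) by (unfold fa; destruct (Req_EM_T 0 0); [reflexivity|lra]).
  assert (fb0 : fb 0 = 1/24) by (unfold fb; destruct (Req_EM_T 0 0); [reflexivity|lra]).
  assert (fa2 : fa (2 * PI) = 0) by (rewrite fa_A by lra; apply A_2PI).
  assert (fb2 : fb (2 * PI) = 0) by (rewrite fb_B by lra; apply B_2PI).
  assert (Rinc : forall x y, 0 < x -> x < y -> y < 2 * PI -> fa x / fb x < fa y / fb y).
  { intros. rewrite !fa_A, !fb_B by lra. apply R_inc; lra. }
  assert (Rub : forall t, 0 < t < 2 * PI -> fa t / fb t <= 4 * PI ^ 2).
  { intros t Ht. destruct (Rle_lt_dec (fa t / fb t) (4 * PI ^ 2)) as [|Hgt]; [assumption|exfalso].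
    destruct (lim_eps (fa t / fb t - 4 * PI ^ 2)) as [d [Hd Hs]]; [lra|].
    set (s := 2 * PI - Rmin d (2 * PI - t) / 2).
    assert (Hm1 := Rmin_l d (2 * PI - t)). assert (Hm2 := Rmin_r d (2 * PI - t)).
    assert (0 < Rmin d (2 * PI - t)) by (apply Rmin_pos; lra).
    assert (Hs' := Hs s ltac:(unfold s; lra)).
    assert (fa t / fb t < fa s / fb s) by (apply Rinc; unfold s; lra).
    apply Rabs_def2 in Hs'. lra. }
  split; [intros; rewrite !fa_A by lra; apply A_dec; lra|].
  split; [intros; rewrite fa_A by lra; apply A_pos; lra|].
  split; [exact fa0|]. split; [exact fa2|].
  split.
  { intros t Ht. rewrite fa0, fa2, fa_A by lra. split; [|apply A_pos; lra].
    assert (A t < A (t/4)) by (apply A_dec; lra).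
    assert (A (t/4) <= 1/2) by (apply A_small; lra). lra. }
  split; [intros; rewrite !fb_B by lra; apply B_dec; lra|].
  split; [intros; rewrite fb_B by lra; apply B_pos; lra|].
  split; [exact fb0|]. split; [exact fb2|].
  split.
  { intros t Ht. rewrite fb0, fb2, fb_B by lra. split; [|apply B_pos; lra].
    assert (B t < B (t/4)) by (apply B_dec; lra).
    assert (B (t/4) <= 1/24) by (apply B_small; lra). lra. }
  split.
  { intros x y Hx Hxy Hy. destruct (Req_dec x 0) as [->|Hx0]; [|apply Rinc; lra].
    rewrite fa0, fb0.
    assert (fa (y/4) / fb (y/4) < fa y / fb y) by (apply Rinc; lra).
    rewrite fa_A, fb_B in H |- * by lra.
    assert (12 * B (y/4) <= A (y/4)) by (apply R_small; lra).
    assert (0 < B (y/4)) by (apply B_pos; lra).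
    assert (12 <= A (y/4) / B (y/4)).
    { apply Rmult_le_reg_r with (B (y/4)); [lra|]. unfold Rdiv. rewrite Rmult_assoc, Rinv_l, Rmult_1_r; lra. }
    rewrite (fa_A y), (fb_B y) in H by lra.
    replace (1 / 2 / (1 / 24)) with 12 by field. lra. }
  split; [|exact lim_R].
  split.
  - intros r [t [Ht ->]]. apply Rub; exact Ht.
  - intros b Hb. destruct (Rle_lt_dec (4 * PI ^ 2) b) as [|Hlt]; [assumption|exfalso].
    destruct (lim_eps (4 * PI ^ 2 - b)) as [d [Hd Hs]]; [lra|].
    set (s := 2 * PI - Rmin d (2 * PI) / 2).
    assert (Hm1 := Rmin_l d (2 * PI)). assert (Hm2 := Rmin_r d (2 * PI)).
    assert (0 < Rmin d (2 * PI)) by (apply Rmin_pos; lra).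
    assert (Hs' := Hs s ltac:(unfold s; lra)).
    assert (fa s / fb s <= b) by (apply Hb; exists s; split; [unfold s; lra | reflexivity]).
    apply Rabs_def2 in Hs'. lra.
Qed.
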